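(* Let $n \ge 1$ and $r \ge 1$ be integers, $p \in (0,1)$, and let $X_1,\dots,X_r$ be i.i.d. with $X_i = \frac{1}{n}Y_i$, $Y_i \sim \mathrm{Bin}(n,p)$. Let $Z = \min_{1\le i\le r} X_i$. Fix $\delta \in (0,1)$ and define \[ \Delta(\delta,p,n) = \log_2\frac{2}{\delta} + 4\log_2(n+1) + \Big[\log_2\frac{p}{1-p}\Big]_+ . \] Assume $\Delta(\delta,p,n) < \log_2 r$. Then: (i) if $\mathsf{KL}(0\Vert p) \ge \frac{\log_2 r - \Delta(\delta,p,n)}{n}$, then with probability at least $1-\delta$, \[ Z < p \quad\text{and}\quad \frac{\log_2 r - \Delta(\delta,p,n)}{n} \le \mathsf{KL}(Z\Vert p) \le \frac{\log_2 r + \Delta(\delta,p,n)}{n}; \] (ii) if $\mathsf{KL}(0\Vert p) < \frac{\log_2 r - \Delta(\delta,p,n)}{n}$, then $\mathbb{P}(Z = 0) \ge 1-\delta$.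
   Context: All logarithms are base $2$ unless written $\ln$. For $\alpha \in [0,1]$ and $\beta \in (0,1)$, $\mathsf{KL}(\alpha\Vert\beta) = \alpha\log_2\frac{\alpha}{\beta} + (1-\alpha)\log_2\frac{1-\alpha}{1-\beta}$ denotes the KL divergence (in bits) between $\mathrm{Bernoulli}(\alpha)$ and $\mathrm{Bernoulli}(\beta)$, with the convention $0\log 0 = 0$ (so $\mathsf{KL}(0\Vert p) = \log_2\frac{1}{1-p}$). For real $x$, $[x]_+ = \max(x,0)$. *)

(* Defs.v *)
From HB Require Import structures.
From mathcomp Require Import all_boot all_order all_algebra.
From mathcomp Require Import all_classical all_reals all_analysis.
Set Implicit Arguments. Unset Strict Implicit. Unset Printing Implicit Defensive.
Import Order.TTheory GRing.Theory Num.Theory.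
Local Open Scope ring_scope.

Section Defs.
Variable R : realType.

Definition log2 (x : R) : R := ln x / ln 2.

Definition xlogratio (a b : R) : R := if a == 0 then 0 else a * log2 (a / b).

(* KL(alpha || beta) in bits between Bernoulli(alpha) and Bernoulli(beta) *)
Definition KL (alpha beta : R) : R :=
  xlogratio alpha beta + xlogratio (1 - alpha) (1 - beta).

Definition posp (x : R) : R := Num.max x 0.

Definition Delta (delta p : R) (n : nat) : R :=
  log2 (2 / delta) + 4 * log2 (n.+1)%:R + posp (log2 (p / (1 - p))).

Definition binom_pmf (n : nat) (p : R) (k : nat) : R :=
  'C(n, k)%:R * p ^+ k * (1 - p) ^+ (n - k).

(* Sample space for (Y_1,...,Y_r), Y_i in {0..n}; joint law of r i.i.d.
   Bin(n,p) variables is the product pmf. *)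
Definition iid_binom_prob (n r : nat) (p : R)
    (E : pred {ffun 'I_r -> 'I_n.+1}) : R :=
  \sum_(y : {ffun 'I_r -> 'I_n.+1} | E y) \prod_(i < r) binom_pmf n p (y i).

(* Z = min_i X_i = (min_i Y_i) / n  (for r >= 1; values Y_i <= n) *)
Definition Zmin (n r : nat) (y : {ffun 'I_r -> 'I_n.+1}) : R :=
  (\big[minn/n]_(i < r) (y i : nat))%:R / n%:R.

End Defs.

Arguments iid_binom_prob {R} n r p E.
Arguments Zmin {R n r} y.
Arguments Delta {R} delta p n.
Arguments KL {R} alpha beta.

(* Main.v *)
Require Import Defs.
From HB Require Import structures.
From mathcomp Require Import all_boot all_order all_algebra.
From mathcomp Require Import all_classical all_reals all_analysis.
From mathcomp Require Import ring lra zify.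
Set Implicit Arguments. Unset Strict Implicit. Unset Printing Implicit Defensive.
Import Order.TTheory GRing.Theory Num.Theory.
Local Open Scope ring_scope.

Lemma bpmf_ge0 (R : realType) (n : nat) (q : R) k : 0 <= q <= 1 -> 0 <= binom_pmf n q k.
Proof.
move=> /andP[q0 q1]; rewrite /binom_pmf.
by rewrite !mulr_ge0 // ?exprn_ge0 // subr_ge0.
Qed.

Lemma bpmf_sum (R : realType) (n : nat) (q : R) :
  \sum_(k < n.+1) binom_pmf n q k = 1.
Proof.
have := exprDn (1 - q) q n; rewrite subrK expr1n => h.
rewrite [RHS]h; apply: eq_bigr => i _; by rewrite /binom_pmf -[RHS]mulr_natl -mulrA [q ^+ _ * _]mulrC.
Qed.

Lemma bpmf_le1 (R : realType) (n : nat) (q : R) (k : 'I_n.+1) : 0 <= q <= 1 ->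
  binom_pmf n q k <= 1.
Proof.
move=> hq; rewrite -(bpmf_sum n q) (bigD1 k) //= lerDl.
by apply: sumr_ge0 => i _; apply: bpmf_ge0.
Qed.

Lemma bpmf_step (R : realType) (n : nat) (q : R) k : (k < n)%N ->
  binom_pmf n q k.+1 * (k.+1)%:R * (1 - q) = binom_pmf n q k * (n - k)%:R * q.
Proof.
move=> kn; rewrite /binom_pmf.
have e1 : ('C(n, k.+1) * k.+1)%N = ((n - k) * 'C(n, k))%N by rewrite mulnC mul_bin_left.
have e2 : (n - k = (n - k.+1).+1)%N by lia.
have h : ('C(n, k.+1)%:R * (k.+1)%:R = (n - k)%:R * 'C(n, k)%:R :> R).
  by rewrite -!natrM e1.
rewrite [in RHS]e2 [(1 - q) ^+ (n - k.+1).+1]exprS [q ^+ k.+1]exprS.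
move: h; rewrite -e2.
move: ('C(n, k.+1)%:R) ((k.+1)%:R) ((n - k)%:R) ('C(n, k)%:R) (q ^+ k) ((1 - q) ^+ (n - k.+1)) => a b c d e f h.
transitivity (a * b * (q * e * f * (1 - q))); first ring.
rewrite h; ring.
Qed.

Lemma bpmf_up (R : realType) (n : nat) (q : R) j : 0 <= q < 1 -> (j < n)%N ->
  (j.+1)%:R * (1 - q) <= (n - j)%:R * q -> binom_pmf n q j <= binom_pmf n q j.+1.
Proof.
move=> /andP[q0 q1] jn h.
have c0 : 0 < (j.+1)%:R * (1 - q) by rewrite mulr_gt0 // ?ltr0n // subr_gt0.
have p0 : 0 <= binom_pmf n q j by apply: bpmf_ge0; rewrite q0 ltW.
rewrite -(ler_pM2r c0) !mulrA bpmf_step //.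
by rewrite -(mulrA (binom_pmf n q j)) -(mulrA (binom_pmf n q j)); apply: ler_wpM2l.
Qed.

Lemma bpmf_down (R : realType) (n : nat) (q : R) j : 0 <= q < 1 -> (j < n)%N ->
  (n - j)%:R * q <= (j.+1)%:R * (1 - q) -> binom_pmf n q j.+1 <= binom_pmf n q j.
Proof.
move=> /andP[q0 q1] jn h.
have c0 : 0 < (j.+1)%:R * (1 - q) by rewrite mulr_gt0 // ?ltr0n // subr_gt0.
have p0 : 0 <= binom_pmf n q j by apply: bpmf_ge0; rewrite q0 ltW.
rewrite -(ler_pM2r c0) !mulrA bpmf_step //.
by rewrite -(mulrA (binom_pmf n q j)) -(mulrA (binom_pmf n q j)); apply: ler_wpM2l.
Qed.

Lemma bpmf_mode (R : realType) (n : nat) (q : R) (m : nat) : 0 <= q < 1 -> (m <= n)%N ->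
  (forall j, (j < m)%N -> (j.+1)%:R * (1 - q) <= (n - j)%:R * q) ->
  (forall j, (m <= j)%N -> (j < n)%N -> (n - j)%:R * q <= (j.+1)%:R * (1 - q)) ->
  1 / (n.+1)%:R <= binom_pmf n q m.
Proof.
move=> hq mn hup hdn.
have hmax : forall j, (j <= n)%N -> binom_pmf n q j <= binom_pmf n q m.
  move=> j jn; case: (leqP j m) => jm.
    have : forall d, (d <= m)%N -> binom_pmf n q (m - d) <= binom_pmf n q m.
      elim=> [|d IH] dm; first by rewrite subn0.
      apply: le_trans (IH (ltnW dm)).
      have -> : (m - d = (m - d.+1).+1)%N by lia.
      apply: bpmf_up => //; first lia.
      apply: hup; lia.
    move=> /(_ (m - j)%N (leq_subr _ _)).
    by have -> : (m - (m - j) = j)%N by lia.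
  have : forall d, (m + d <= n)%N -> binom_pmf n q (m + d) <= binom_pmf n q m.
    elim=> [|d IH] dm; first by rewrite addn0.
    have dm' : (m + d < n)%N by lia.
    apply: le_trans (IH (ltnW dm')).
    rewrite addnS; apply: bpmf_down => //.
    apply: hdn => //; lia.
  move=> /(_ (j - m)%N).
  have -> : (m + (j - m) = j)%N by lia.
  by move=> /(_ jn).
have hq' : 0 <= q <= 1 by case/andP: hq => -> /ltW ->.
have : \sum_(i < n.+1) binom_pmf n q i <= \sum_(i < n.+1) binom_pmf n q m.
  apply: ler_sum => i _; apply: hmax; exact: (ltn_ord i).
rewrite sumr_const card_ord bpmf_sum -mulr_natl => h.
by rewrite ler_pdivrMr ?ltr0n // mulr1 mulr_natr.
Qed.

Lemma ln2_gt0 (R : realType) : 0 < ln (2 : R).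
Proof. by apply: ln_gt0; rewrite ltr1n. Qed.

Lemma xlr_ln (R : realType) (a b : R) :
  xlogratio a b * ln 2 = if a == 0 then 0 else a * ln (a / b).
Proof.
rewrite /xlogratio; case: ifP => _; first by rewrite mul0r.
rewrite /log2 -mulrA divfK //.
by have := ln2_gt0 R; rewrite lt0r => /andP[].
Qed.

Lemma term_id (R : realType) (a b N : R) (m : nat) : 0 <= a -> 0 < b -> N * a = m%:R ->
  a ^+ m * expR (- (N * (xlogratio a b * ln 2))) = b ^+ m.
Proof.
move=> a0 b0 hN; rewrite xlr_ln.
case: eqP => [az|/eqP anz].
  move: hN; rewrite az mulr0 => /esym/eqP; rewrite pnatr_eq0 => /eqP ->.
  by rewrite !expr0 oppr0 expR0 mulr1.
have apos : 0 < a by rewrite lt_def anz a0.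
rewrite mulrA hN.
have -> : - (m%:R * ln (a / b)) = m%:R * ln (b / a).
  rewrite -mulrN; congr (_ * _).
  rewrite -lnV; last by rewrite posrE divr_gt0.
  by rewrite invf_div.
rewrite expRM_natl lnK; last by rewrite posrE divr_gt0.
rewrite -exprMn; congr (_ ^+ _).
by rewrite mulrC divfK // gt_eqF.
Qed.

Lemma KL_id (R : realType) (n k : nat) (p : R) : (1 <= n)%N -> (k <= n)%N -> 0 < p < 1 ->
  binom_pmf n p k =
  binom_pmf n (k%:R / n%:R) k * expR (- (n%:R * (KL (k%:R / n%:R) p * ln 2))).
Proof.
move=> n1 kn /andP[p0 p1].
set x := k%:R / n%:R.
have n0 : (0 : R) < n%:R by rewrite ltr0n.
have x0 : 0 <= x by rewrite divr_ge0.
have x1 : x <= 1 by rewrite /x ler_pdivrMr // mul1r ler_nat.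
have nx : n%:R * x = k%:R by rewrite /x mulrC divfK // gt_eqF.
have nx' : n%:R * (1 - x) = (n - k)%:R by rewrite mulrBr mulr1 nx natrB.
rewrite /KL mulrDl mulrDr opprD expRD /binom_pmf.
have t1 := term_id (b:=p) (m:=k) x0 p0 nx.
have x1m : 0 <= 1 - x by rewrite subr_ge0.
have p1m : 0 < 1 - p by rewrite subr_gt0.
have t2 := term_id (b:=1 - p) (m := (n - k)%N) x1m p1m nx'.
move: t1 t2.
move: (expR (- (n%:R * (xlogratio x p * ln 2)))) (expR (- (n%:R * (xlogratio (1 - x) (1 - p) * ln 2)))) => e1 e2 t1 t2.
rewrite -t1 -t2.
move: ('C(n, k)%:R) (x ^+ k) ((1 - x) ^+ (n - k)) => c u v; ring.
Qed.

Lemma bpmf_upper (R : realType) (n k : nat) (p : R) : (1 <= n)%N -> (k <= n)%N -> 0 < p < 1 ->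
  binom_pmf n p k <= expR (- (n%:R * (KL (k%:R / n%:R) p * ln 2))).
Proof.
move=> n1 kn hp; rewrite KL_id //.
rewrite -[X in _ <= X]mul1r; apply: ler_wpM2r; first exact: expR_ge0.
have kn' : (k < n.+1)%N by [].
have := @bpmf_le1 R n (k%:R / n%:R) (Ordinal kn'); apply.
have n0 : (0 : R) < n%:R by rewrite ltr0n.
by rewrite divr_ge0 //= ler_pdivrMr // mul1r ler_nat.
Qed.

Lemma cmp_x (R : realType) (n k A B : nat) : (1 <= n)%N -> (k <= n)%N ->
  (A%:R * (1 - k%:R / n%:R) <= B%:R * (k%:R / n%:R) :> R) = (A * (n - k) <= B * k)%N.
Proof.
move=> n1 kn.
have n0 : (0 : R) < n%:R by rewrite ltr0n.
have -> : 1 - k%:R / n%:R = (n - k)%:R / n%:R :> R.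
  by rewrite natrB // mulrBl divff ?gt_eqF.
by rewrite !mulrA ler_pM2r ?invr_gt0 // -!natrM ler_nat.
Qed.

Lemma cmp_x2 (R : realType) (n k A B : nat) : (1 <= n)%N -> (k <= n)%N ->
  (B%:R * (k%:R / n%:R) <= A%:R * (1 - k%:R / n%:R) :> R) = (B * k <= A * (n - k))%N.
Proof.
move=> n1 kn.
have n0 : (0 : R) < n%:R by rewrite ltr0n.
have -> : 1 - k%:R / n%:R = (n - k)%:R / n%:R :> R.
  by rewrite natrB // mulrBl divff ?gt_eqF.
by rewrite !mulrA ler_pM2r ?invr_gt0 // -!natrM ler_nat.
Qed.

Lemma bpmf_lower (R : realType) (n k : nat) (p : R) : (0 < k)%N -> (k < n)%N -> 0 < p < 1 ->
  expR (- (n%:R * (KL (k%:R / n%:R) p * ln 2))) / (n.+1)%:R <= binom_pmf n p k.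
Proof.
move=> k0 kn hp.
have n1 : (1 <= n)%N by lia.
rewrite KL_id //; last exact: ltnW.
rewrite [X in X <= _]mulrC; apply: ler_wpM2r; first exact: expR_ge0.
have n0 : (0 : R) < n%:R by rewrite ltr0n.
have -> : (n.+1)%:R^-1 = 1 / (n.+1)%:R :> R by rewrite div1r.
apply: (bpmf_mode (m:=k)).
- by rewrite divr_ge0 //= ltr_pdivrMr // mul1r ltr_nat.
- exact: ltnW.
- move=> j jk; rewrite (@cmp_x R n k j.+1 (n - j)%N n1 (ltnW kn)) (mulnC (n - j)%N k).
  exact: (leq_mul jk (leq_sub2l n (ltnW jk))).
- move=> j jk jn; rewrite (@cmp_x2 R n k j.+1 (n - j)%N n1 (ltnW kn)) (mulnC j.+1).
  exact: leq_mul (leq_sub2l n jk) (leqW jk).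
Qed.

Definition gg (R : realType) (a b : R) := if a == 0 then 0 else a * ln (a / b).

Lemma gg_ge (R : realType) (a b : R) : 0 <= a -> 0 < b -> a - b <= gg a b.
Proof.
move=> a0 b0; rewrite /gg; case: eqP => [->|/eqP anz]; first by rewrite sub0r oppr_le0 ltW.
have apos : 0 < a by rewrite lt_def anz a0.
have h := @le_ln1Dx R (b / a - 1).
have hh : -1 < b / a - 1 by have := divr_gt0 b0 apos; lra.
move: (h hh); rewrite addrC subrK => hl.
have -> : ln (a / b) = - ln (b / a).
  by rewrite -lnV ?posrE ?divr_gt0 // invf_div.
have : a * ln (b / a) <= a * (b / a - 1) by rewrite ler_pM2l.
rewrite mulrBr mulr1 (mulrC a (b / a)) divfK ?gt_eqF // => hl2.
by rewrite mulrN lerNr opprB.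
Qed.

Lemma gg_split (R : realType) (x y p : R) : 0 <= x -> 0 < y -> 0 < p ->
  gg x p = gg x y + x * ln (y / p).
Proof.
move=> x0 y0 p0; rewrite /gg; case: eqP => [->|/eqP xnz]; first by rewrite mul0r addr0.
have xpos : 0 < x by rewrite lt_def xnz x0.
rewrite -mulrDr -lnM ?posrE ?divr_gt0 //.
by rewrite mulrA divfK ?gt_eqF.
Qed.

Lemma KL_gg (R : realType) (a b : R) : KL a b * ln 2 = gg a b + gg (1 - a) (1 - b).
Proof. by rewrite /KL mulrDl !xlr_ln. Qed.

Lemma KL_mono (R : realType) (x y p : R) : 0 <= x -> x <= y -> y <= p -> 0 < p -> p < 1 ->
  KL y p <= KL x p.
Proof.
move=> x0 xy yp p0 p1.
rewrite -(ler_pM2r (ln2_gt0 R)) !KL_gg.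
have [y0|ynz] := eqVneq y 0.
  have -> : x = y by apply/eqP; rewrite eq_le xy y0 x0.
  by [].
have ypos : 0 < y by rewrite lt_def ynz (le_trans x0 xy).
have y1 : 0 < 1 - y by rewrite subr_gt0 (le_lt_trans yp p1).
have x1 : 0 <= 1 - x by rewrite subr_ge0 ltW // (le_lt_trans xy (le_lt_trans yp p1)).
have pm : 0 < 1 - p by rewrite subr_gt0.
rewrite (gg_split x0 ypos p0) (gg_split x1 y1 pm).
rewrite (gg_split (ltW ypos) ypos p0) (gg_split (ltW y1) y1 pm).
have gyy : forall z : R, 0 < z -> gg z z = 0.
  by move=> z z0; rewrite /gg gt_eqF // divff ?gt_eqF // ln1 mulr0.
rewrite !gyy //.
have G1 := gg_ge x0 ypos.
have G2 := gg_ge x1 y1.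
have L1 : ln (y / p) <= 0 by apply: ln_le0; rewrite ler_pdivrMr // mul1r.
have L2 : 0 <= ln ((1 - y) / (1 - p)).
  apply: ln_ge0; rewrite ler_pdivlMr // mul1r; by rewrite lerB.
move: G1 G2 L1 L2.
move: (gg x y) (gg (1 - x) (1 - y)) (ln (y / p)) (ln ((1 - y) / (1 - p))) => a b c d.
move=> G1 G2 L1 L2.
have : 0 <= (y - x) * (- c) by rewrite mulr_ge0 // ?subr_ge0 // oppr_ge0.
have : 0 <= (y - x) * d by rewrite mulr_ge0 // subr_ge0.
nra.
Qed.

Lemma probE (R : realType) n r (p : R) (E : pred {ffun 'I_r -> 'I_n.+1}) :
  iid_binom_prob n r p E =
  \sum_y (E y)%:R * \prod_(i < r) binom_pmf n p (y i).
Proof.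
rewrite /iid_binom_prob big_mkcond; apply: eq_bigr => y _.
by case: (E y); rewrite ?mul1r ?mul0r.
Qed.

Lemma w_ge0 (R : realType) n r (p : R) (y : {ffun 'I_r -> 'I_n.+1}) : 0 <= p <= 1 ->
  0 <= \prod_(i < r) binom_pmf n p (y i).
Proof. move=> hp; apply: prodr_ge0 => i _. exact: bpmf_ge0. Qed.

Lemma prob_family (R : realType) n r (p : R) (A : 'I_r -> pred 'I_n.+1) :
  iid_binom_prob n r p (fun y => [forall i, y i \in A i]) =
  \prod_(i < r) \sum_(k : 'I_n.+1 | k \in A i) binom_pmf n p k.
Proof.
rewrite (bigA_distr_big_dep _ (fun i (k : 'I_n.+1) => binom_pmf n p k)) /iid_binom_prob.
apply: eq_bigl => y; apply/forallP/familyP => h x; exact: h.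
Qed.

Lemma prob_total (R : realType) n r (p : R) :
  iid_binom_prob n r p (fun _ => true) = 1.
Proof.
have -> : iid_binom_prob n r p (fun _ => true) =
          iid_binom_prob n r p (fun y => [forall i, y i \in (predT : pred 'I_n.+1)]).
  by rewrite /iid_binom_prob; apply: eq_bigl => y; apply/esym/forallP.
rewrite prob_family; apply: big1 => i _.
by rewrite -(bpmf_sum n p); apply: eq_bigl.
Qed.

Lemma prob_compl (R : realType) n r (p : R) (E : pred {ffun 'I_r -> 'I_n.+1}) :
  iid_binom_prob n r p E = 1 - iid_binom_prob n r p (fun y => ~~ E y).
Proof.
rewrite -(prob_total n r p) /iid_binom_prob.
by rewrite [X in _ = X - _](bigID E) /= addrK.
Qed.

Lemma prob_mono (R : realType) n r (p : R) (E F : pred {ffun 'I_r -> 'I_n.+1}) :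
  0 <= p <= 1 -> (forall y, E y -> F y) ->
  iid_binom_prob n r p E <= iid_binom_prob n r p F.
Proof.
move=> hp hEF; rewrite !probE; apply: ler_sum => y _.
apply: ler_wpM2r; first exact: w_ge0.
case hE: (E y); last by case: (F y).
by rewrite (hEF _ hE).
Qed.

Lemma prob_union (R : realType) n r (p : R) (E F : pred {ffun 'I_r -> 'I_n.+1}) :
  0 <= p <= 1 ->
  iid_binom_prob n r p (fun y => E y || F y) <=
  iid_binom_prob n r p E + iid_binom_prob n r p F.
Proof.
move=> hp; rewrite !probE -big_split /=; apply: ler_sum => y _.
rewrite -mulrDl; apply: ler_wpM2r; first exact: w_ge0.
by case: (E y); case: (F y); rewrite /= ?addr0 ?add0r // lerDl ler01.
Qed.

Lemma prob_coord (R : realType) n r (p : R) (i : 'I_r) (T : pred 'I_n.+1) :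
  iid_binom_prob n r p (fun y => y i \in T) = \sum_(k : 'I_n.+1 | k \in T) binom_pmf n p k.
Proof.
pose A := fun j : 'I_r => if j == i then T else (predT : pred 'I_n.+1).
have -> : iid_binom_prob n r p (fun y => y i \in T) =
          iid_binom_prob n r p (fun y => [forall j, y j \in A j]).
  rewrite /iid_binom_prob; apply: eq_bigl => y; apply/idP/forallP.
    by move=> h j; rewrite /A; case: eqP => [->|].
  by move=> /(_ i); rewrite /A; case: eqP => // /(_ erefl).
have E1 : \prod_(j < r | j != i) \sum_(k : 'I_n.+1 | k \in A j) binom_pmf n p k = 1.
  apply: big1 => j /negbTE ji; rewrite /A ji -(bpmf_sum n p); by apply: eq_bigl.
rewrite prob_family (bigD1 i) //= E1 mulr1.
by apply: eq_bigl => k; rewrite /A; case: eqP => // /(_ erefl).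
Qed.

Lemma prob_exists (R : realType) n r (p : R) (T : pred 'I_n.+1) :
  0 <= p <= 1 ->
  iid_binom_prob n r p (fun y => [exists i, y i \in T]) <=
  r%:R * \sum_(k : 'I_n.+1 | k \in T) binom_pmf n p k.
Proof.
move=> hp.
have -> : r%:R * \sum_(k : 'I_n.+1 | k \in T) binom_pmf n p k =
   \sum_(i < r) iid_binom_prob n r p (fun y => y i \in T).
  by rewrite (eq_bigr _ (fun i _ => prob_coord p i T)) sumr_const card_ord mulr_natl.
rewrite probE (eq_bigr _ (fun i _ => probE p _)) exchange_big /=.
apply: ler_sum => y _; rewrite -mulr_suml; apply: ler_wpM2r; first exact: w_ge0.
case: existsP => [[i0 hi0]|_]; last by apply: sumr_ge0 => i _; case: (_ \in _).
rewrite (bigD1 i0) //= hi0 lerDl; apply: sumr_ge0 => i _; by case: (_ \in _).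
Qed.

Lemma expN_le_inv (R : realType) (t : R) : 0 < t -> expR (- t) <= 1 / t.
Proof.
move=> t0; rewrite expRN div1r lef_pV2 ?posrE ?expR_gt0 //.
by have := expR_ge1Dx t; lra.
Qed.

Lemma pow_le_exp (R : realType) (q : R) (r : nat) : 0 <= q <= 1 ->
  (1 - q) ^+ r <= expR (- (r%:R * q)).
Proof.
move=> /andP[q0 q1].
rewrite -mulrN expRM_natl; apply: lerXn2r.
- by rewrite nnegrE subr_ge0.
- by rewrite nnegrE expR_ge0.
- by have := expR_ge1Dx (- q); lra.
Qed.

Lemma prob_avoid (R : realType) n r (p : R) (k0 : 'I_n.+1) :
  iid_binom_prob n r p (fun y => [forall i, y i \in [pred k | k != k0]]) =
  (1 - binom_pmf n p k0) ^+ r.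
Proof.
rewrite prob_family prodr_const card_ord; congr (_ ^+ _).
rewrite -(bpmf_sum n p) [X in _ = X - _](bigD1 k0) //= addrC addrK.
by apply: eq_bigl => k.
Qed.

Lemma bigminn_le n r (y : {ffun 'I_r -> 'I_n.+1}) (i : 'I_r) :
  (\big[minn/n]_(j < r) (y j : nat) <= y i)%N.
Proof.
have : forall s : seq 'I_r, i \in s -> (\big[minn/n]_(j <- s) (y j : nat) <= y i)%N.
  elim=> [//|a s IH]; rewrite inE big_cons => /orP[/eqP ->|his].
    by rewrite geq_minl.
  by apply: leq_trans (geq_minr _ _) (IH his).
by apply; rewrite mem_index_enum.
Qed.

Lemma bigminn_att n r (y : {ffun 'I_r -> 'I_n.+1}) : (0 < r)%N ->
  exists j, \big[minn/n]_(j < r) (y j : nat) = y j.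
Proof.
move=> r0.
have : \big[minn/n]_(j < r) (y j : nat) = n \/ exists j, \big[minn/n]_(j < r) (y j : nat) = y j.
  apply: (big_ind (fun m => m = n \/ exists j, m = y j)); first by left.
    move=> x1 x2 h1 h2 /=; rewrite /minn; case: ifP => _.
      by case: h1 => [->|[j ->]]; [left | right; exists j].
    by case: h2 => [->|[j ->]]; [left | right; exists j].
  by move=> j _; right; exists j.
case=> [hn|[j hj]]; last by exists j.
exists (Ordinal r0).
apply/eqP; rewrite eqn_leq bigminn_le hn /=.
by rewrite -ltnS ltn_ord.
Qed.

Lemma conv_le_l (R : realType) (u K N l : R) : 0 < N -> 0 < l ->
  (u / N <= K) = (u * l <= N * (K * l)).
Proof.
move=> N0 l0; rewrite ler_pdivrMr // -(ler_pM2r l0).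
by have -> : N * (K * l) = K * N * l by ring.
Qed.

Lemma conv_le_r (R : realType) (u K N l : R) : 0 < N -> 0 < l ->
  (K <= u / N) = (N * (K * l) <= u * l).
Proof.
move=> N0 l0; rewrite ler_pdivlMr // -(ler_pM2r l0).
by have -> : N * (K * l) = K * N * l by ring.
Qed.

Lemma conv_lt_r (R : realType) (u K N l : R) : 0 < N -> 0 < l ->
  (K < u / N) = (N * (K * l) < u * l).
Proof.
move=> N0 l0; rewrite ltr_pdivlMr // -(ltr_pM2r l0).
by have -> : N * (K * l) = K * N * l by ring.
Qed.

Lemma log2_ln (R : realType) (x : R) : log2 x * ln 2 = ln x.
Proof. by rewrite /log2 divfK // gt_eqF // ln2_gt0. Qed.

Lemma expR_max0 (R : realType) (l : R) : expR (Num.max l 0) = Num.max (expR l) 1.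
Proof.
rewrite /Order.max -expR0 ltr_expR; by case: ifP.
Qed.

Lemma eDelta (R : realType) (delta p : R) (n : nat) : 0 < delta -> 0 < p < 1 ->
  expR (Delta delta p n * ln 2) =
  2 / delta * (n.+1)%:R ^+ 4 * Num.max (p / (1 - p)) 1.
Proof.
move=> d0 /andP[p0 p1].
rewrite /Delta /posp (mulrDl _ _ (ln 2)) (mulrDl _ _ (ln 2)) log2_ln -(mulrA 4) log2_ln.
rewrite (maxr_pMl _ _ (ltW (ln2_gt0 R))) mul0r log2_ln !expRD expR_max0.
have e4 : expR (4 * ln (n.+1)%:R) = (n.+1)%:R ^+ 4 :> R.
  by rewrite (expRM_natl 4) lnK // posrE ltr0n.
rewrite e4 lnK ?posrE ?divr_gt0 //.
by rewrite lnK // posrE divr_gt0 // subr_gt0.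
Qed.

Unset Implicit Arguments.

Theorem theorem1 (R : realType) (n r : nat) (p delta : R) :
  (1 <= n)%N -> (1 <= r)%N ->
  0 < p < 1 -> 0 < delta < 1 ->
  Delta delta p n < log2 r%:R ->
  (KL 0 p >= (log2 r%:R - Delta delta p n) / n%:R ->
     iid_binom_prob n r p (fun y =>
        [&& Zmin y < p,
            (log2 r%:R - Delta delta p n) / n%:R <= KL (Zmin y) p &
            KL (Zmin y) p <= (log2 r%:R + Delta delta p n) / n%:R])
     >= 1 - delta) /\
  (KL 0 p < (log2 r%:R - Delta delta p n) / n%:R ->
     iid_binom_prob n r p (fun y => Zmin y == 0 :> R) >= 1 - delta).
Proof.
move=> n1 r1 hp hd hD.
have /andP[p0 p1] := hp; have /andP[d0 d1] := hd.
have hp01 : 0 <= p <= 1 by rewrite ltW // ltW.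
have l0 := ln2_gt0 R.
have N0 : (0 : R) < n%:R by rewrite ltr0n.
have r0 : (0 : R) < r%:R by rewrite ltr0n.
set D' := Delta delta p n * ln 2.
set M := Num.max (p / (1 - p)) 1.
set F := fun x : R => n%:R * (KL x p * ln 2).
have eD := eDelta n d0 hp; rewrite -/D' -/M in eD.
have lr : log2 (r%:R : R) * ln 2 = ln (r%:R : R) by rewrite log2_ln.
have hD' : D' < ln (r%:R : R) by rewrite -lr /D' ltr_pM2r.
have M1 : 1 <= M by rewrite /M le_max lexx orbT.
have Mp : p <= (1 - p) * M.
  rewrite /M /Order.max; case: ifP => h.
    by rewrite mulr1; move: h; rewrite ltr_pdivrMr ?subr_gt0 // mul1r => /ltW.
  by rewrite mulrC divfK // gt_eqF // subr_gt0.
have expD : 2 / delta <= expR D'.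
  rewrite eD -mulrA ler_peMr ?divr_ge0 // ?ltW //.
  have h4 : 1 <= (n.+1)%:R ^+ 4 :> R by apply: exprn_ege1; by rewrite ler1n.
  have hh : 0 <= ((n.+1)%:R ^+ 4 - 1) * (M - 1) by rewrite mulr_ge0 // subr_ge0.
  nra.
have expN2 : expR (- (2 / delta)) <= delta / 2.
  have := @expN_le_inv R (2 / delta); rewrite divr_gt0 // => /(_ isT).
  by rewrite div1r invf_div.
have rE : (r%:R : R) * expR (- (ln (r%:R : R) - D')) = expR D'.
  by rewrite opprB expRB lnK ?posrE // mulrC divfK // gt_eqF // expR_gt0.
split.
- move=> hi.
  have G00 : ln (r%:R : R) - D' <= F 0.
    by move: hi; rewrite (conv_le_l _ _ N0 l0) mulrBl lr.
  pose P := fun k : 'I_n.+1 =>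
    ((k : nat)%:R < n%:R * p) && (ln (r%:R : R) - D' <= F ((k : nat)%:R / n%:R)).
  have P0 : P ord0 by rewrite /P /= mul0r mulr_gt0.
  case: (arg_maxnP (fun k : 'I_n.+1 => (k : nat)) P0) => k0 /andP[k0p Gk0] k0max.
  have Np : n%:R * p < n%:R by rewrite gtr_pMr.
  have k0n : (k0 < n)%N by rewrite -(ltr_nat R) (lt_trans k0p Np).
  set E := expR (- (ln (r%:R : R) - D')).
  set Q := E / (n.+1)%:R.
  have E0 : 0 <= E by exact: expR_ge0.
  have E1 : E <= 1 by rewrite /E expR_le1 oppr_le0 subr_ge0 ltW.
  have Nn0 : (0 : R) < (n.+1)%:R by rewrite ltr0n.
  have Q0 : 0 <= Q by rewrite divr_ge0 // ltW.
  have Q1 : Q <= 1 / (n.+1)%:R by rewrite /Q ler_pM2r ?invr_gt0.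
  have hq : 0 <= p < 1 by rewrite ltW.
  have up_fact : forall j, (j < k0)%N -> (j.+1)%:R * (1 - p) <= (n - j)%:R * p.
    move=> j jk.
    have jn : (j <= n)%N by apply: ltnW; apply: leq_trans jk (ltnW k0n).
    have ej : (j.+1)%:R = j%:R + 1 :> R by rewrite -addn1 natrD.
    have hj : (j.+1)%:R <= k0%:R :> R by rewrite ler_nat.
    rewrite natrB // ej; rewrite ej in hj; nra.
  have key : Q <= binom_pmf n p k0.+1 \/ 1 / (n.+1)%:R <= binom_pmf n p k0.
    case hA: ((k0.+1)%:R < n%:R * p).
      left.
      have k1n : (k0.+1 < n)%N by rewrite -(ltr_nat R) (lt_trans hA Np).
      have k1n' : (k0.+1 < n.+1)%N by apply: ltnW; rewrite ltnS.
      have nP1 : ~~ P (Ordinal k1n').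
        apply/negP => hP; have := k0max _ hP; rewrite /= ltnn; by [].
      move: nP1; rewrite /P /= hA /= -ltNge => hF.
      apply: le_trans (bpmf_lower (ltn0Sn k0) k1n hp).
      rewrite /Q ler_pM2r ?invr_gt0 // /E ler_expR lerN2; exact: ltW.
    move/negbT: hA; rewrite -leNgt => hB.
    have dn_fact : forall j, (k0 < j)%N -> (j < n)%N -> (n - j)%:R * p <= (j.+1)%:R * (1 - p).
      move=> j jk jn.
      have ej : (j.+1)%:R = j%:R + 1 :> R by rewrite -addn1 natrD.
      have hj : (k0.+1)%:R <= j%:R :> R by rewrite ler_nat.
      rewrite natrB; last exact: ltnW.
      rewrite ej.
      have : n%:R * p <= j%:R by apply: le_trans hB hj.
      nra.
    case hc: ((k0.+1)%:R * (1 - p) <= (n - k0)%:R * p).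
      left; apply: le_trans Q1 _.
      apply: (bpmf_mode (m := k0.+1)); [exact: hq | exact: k0n | | ].
        move=> j; rewrite ltnS leq_eqVlt => /orP[/eqP ->|jk]; first by rewrite hc.
        exact: up_fact.
      by move=> j jk jn; apply: dn_fact.
    right; apply: (bpmf_mode (m := k0)); [exact: hq | exact: ltnW | exact: up_fact | ].
    move=> j; rewrite leq_eqVlt => /orP[/eqP <-|jk] jn.
      by move/negbT: hc; rewrite -ltNge => /ltW.
    exact: dn_fact.
  have M0 : 0 < M by apply: (lt_le_trans ltr01 M1).
  have N1 : 1 <= (n%:R : R) by rewrite ler1n.
  have MN1 : 1 <= M * n%:R by nra.
  have LB : Q / (M * n%:R) <= binom_pmf n p k0.
    have MN0 : 0 < M * n%:R by rewrite mulr_gt0.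
    rewrite ler_pdivrMr //.
    have pm1 : 0 <= binom_pmf n p k0.+1 by exact: bpmf_ge0.
    have pm0' : 0 <= binom_pmf n p k0 by exact: bpmf_ge0.
    case: key => [hq1|h]; last first.
      apply: (le_trans Q1); apply: (le_trans h).
      have hm : 0 <= M * n%:R - 1 by rewrite subr_ge0.
      have := mulr_ge0 pm0' hm; nra.
    have st := bpmf_step p k0n.
    have K1 : 1 <= (k0.+1)%:R :> R by rewrite ler1n.
    have NK : (n - k0)%:R <= n%:R :> R by rewrite ler_nat leq_subr.
    have omp : 0 < 1 - p by rewrite subr_gt0.
    move: st pm1 pm0' hq1 K1 NK.
    move: (binom_pmf n p k0.+1) (binom_pmf n p k0) ((k0.+1)%:R : R) ((n - k0)%:R : R) => a1 a0 K NK st pm1 pm0' hq1 K1 hNK.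
    have K1' : 0 <= K - 1 by rewrite subr_ge0.
    have NK' : 0 <= n%:R - NK by rewrite subr_ge0.
    have h1 := mulr_ge0 (mulr_ge0 pm1 (ltW omp)) K1'.
    have h2 := mulr_ge0 (mulr_ge0 pm0' (ltW p0)) NK'.
    have s1 : a1 * (1 - p) <= a0 * n%:R * p by nra.
    have aq : 0 <= a1 - Q by rewrite subr_ge0.
    have h3 := mulr_ge0 aq (ltW omp).
    have s2 : Q * (1 - p) <= a0 * n%:R * p by nra.
    have mq : 0 <= (1 - p) * M - p by rewrite subr_ge0.
    have h4 := mulr_ge0 Q0 mq.
    have s2' : 0 <= a0 * n%:R * p - Q * (1 - p) by rewrite subr_ge0.
    have h5 := mulr_ge0 (ltW M0) s2'.
    have h6 : 0 <= p * (a0 * (M * n%:R) - Q) by nra.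
    by move: h6; rewrite pmulr_rge0 // subr_ge0.
  have hrk : 2 / delta <= r%:R * binom_pmf n p k0.
    apply: le_trans (_ : r%:R * (Q / (M * n%:R)) <= _); last first.
      by apply: ler_wpM2l; [exact: ltW | exact: LB].
    have -> : r%:R * (Q / (M * n%:R)) = expR D' / ((n.+1)%:R * (M * n%:R)).
      rewrite -rE /Q -/E; field.
      by rewrite (gt_eqF N0) (gt_eqF M0) /= gt_eqF // addr_gt0.
    rewrite ler_pdivlMr ?mulr_gt0 // eD.
    have hN3 : n%:R <= (n.+1)%:R ^+ 3 :> R.
      apply: le_trans (_ : (n.+1)%:R <= _); first by rewrite ler_nat leqnSn.
      rewrite exprS ler_peMr ?ler0n //; apply: exprn_ege1; by rewrite ler1n.
    have dd : 0 < 2 / delta by rewrite divr_gt0.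
    have h : (n.+1)%:R * (M * n%:R) <= (n.+1)%:R ^+ 4 * M :> R.
      have -> : (n.+1)%:R ^+ 4 * M = (n.+1)%:R * (M * (n.+1)%:R ^+ 3) :> R.
        by rewrite exprS; ring.
      apply: ler_wpM2l; first exact: ltW.
      by apply: ler_wpM2l; first exact: ltW.
    rewrite -mulrA ler_pM2l //.
  pose T := [pred k : 'I_n.+1 | ln (r%:R : R) + D' < F ((k : nat)%:R / n%:R)].
  pose B1 := fun y : {ffun 'I_r -> 'I_n.+1} => [forall i, y i \in [pred k | k != k0]].
  pose B2 := fun y : {ffun 'I_r -> 'I_n.+1} => [exists i, y i \in T].
  have PB1 : iid_binom_prob n r p B1 <= delta / 2.
    rewrite /B1 prob_avoid.
    have pm01 : 0 <= binom_pmf n p k0 <= 1.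
      by rewrite bpmf_ge0 //= (bpmf_le1 k0 hp01).
    apply: (le_trans (pow_le_exp r pm01)); apply: (le_trans _ expN2).
    by rewrite ler_expR lerN2.
  have PB2 : iid_binom_prob n r p B2 <= delta / 2.
    rewrite /B2; apply: (le_trans (@prob_exists R n r p T hp01)).
    set c := expR (- (ln (r%:R : R) + D')).
    have c0 : 0 <= c by exact: expR_ge0.
    have hs : \sum_(k : 'I_n.+1 | k \in T) binom_pmf n p k <= \sum_(k : 'I_n.+1) c.
      apply: le_trans (_ : \sum_(k : 'I_n.+1 | k \in T) c <= _).
        apply: ler_sum => k; rewrite inE => hk.
        apply: (le_trans (bpmf_upper n1 _ hp)); first by rewrite -ltnS ltn_ord.
        by rewrite ler_expR lerN2 ltW.
      rewrite [X in X <= _]big_mkcond; apply: ler_sum => k _.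
      by case: (_ \in _).
    rewrite sumr_const card_ord in hs.
    apply: le_trans (_ : r%:R * (c *+ n.+1) <= _).
      by apply: ler_wpM2l; [exact: ltW | exact: hs].
    have -> : r%:R * (c *+ n.+1) = (n.+1)%:R / expR D'.
      rewrite /c opprD expRD expRN lnK ?posrE // -mulr_natr.
      rewrite expRN; field; rewrite ?gt_eqF ?expR_gt0 //.
    rewrite ler_pdivrMr ?expR_gt0 // eD.
    have -> : delta / 2 * (2 / delta * (n.+1)%:R ^+ 4 * M) = (n.+1)%:R ^+ 4 * M.
      by field; rewrite gt_eqF.
    apply: le_trans (_ : (n.+1)%:R ^+ 4 <= _).
      rewrite exprS ler_peMr ?ler0n //; apply: exprn_ege1; by rewrite ler1n.
    by rewrite ler_peMr ?exprn_ge0 // ler0n.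
  have hmono : iid_binom_prob n r p (fun y => ~~ [&& Zmin y < p,
            (log2 r%:R - Delta delta p n) / n%:R <= KL (Zmin y) p &
            KL (Zmin y) p <= (log2 r%:R + Delta delta p n) / n%:R]) <=
      iid_binom_prob n r p (fun y => B1 y || B2 y).
    apply: prob_mono => // y; apply: contraR; rewrite negb_or => /andP[nB1 nB2].
    move: nB1 => /forallPn [i]; rewrite inE negbK => /eqP hyi.
    move: nB2; rewrite negb_exists => /forallP nT.
    set zn := \big[minn/n]_(j < r) (y j : nat).
    have zk : (zn <= k0)%N by rewrite /zn; have := bigminn_le y i; rewrite hyi.
    have Z0 : 0 <= zn%:R / n%:R :> R by rewrite divr_ge0.
    have Zle : zn%:R / n%:R <= k0%:R / n%:R :> R by rewrite ler_pM2r ?invr_gt0 // ler_nat.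
    have k0p' : k0%:R / n%:R < p by rewrite ltr_pdivrMr // mulrC.
    have klm := KL_mono Z0 Zle (ltW k0p') p0 p1.
    have [j hj] := bigminn_att y r1.
    have nTj := nT j; rewrite inE -leNgt in nTj.
    have h1 : (log2 r%:R - Delta delta p n) / n%:R <= KL (k0%:R / n%:R) p.
      rewrite (conv_le_l _ _ N0 l0); move: Gk0; rewrite /D' -lr -mulrBl; exact.
    have h2 : KL (zn%:R / n%:R) p <= (log2 r%:R + Delta delta p n) / n%:R.
      rewrite (conv_le_r _ _ N0 l0) /zn hj; move: nTj; rewrite /D' -lr -mulrDl; exact.
    apply/and3P; split.
    - exact: (le_lt_trans Zle k0p').
    - exact: (le_trans h1 klm).
    - exact: h2.
  rewrite prob_compl.
  have := le_trans hmono (prob_union B1 B2 hp01).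
  lra.
- move=> hii.
  have F0 : F 0 < ln (r%:R : R) - D'.
    move: hii; rewrite (conv_lt_r _ _ N0 l0) mulrBl lr //.
  have pm0 : binom_pmf n p 0 = expR (- F 0).
    rewrite (KL_id n1 (leq0n n) hp) mul0r /binom_pmf /F.
    by rewrite bin0 !expr0 subr0 expr1n !mul1r.
  set E := fun y : {ffun 'I_r -> 'I_n.+1} => [forall i, y i \in [pred k | k != @ord0 n]].
  have hmono : iid_binom_prob n r p (fun y => ~~ E y) <=
               iid_binom_prob n r p (fun y => Zmin y == 0 :> R).
    apply: prob_mono => // y /forallPn [i]; rewrite inE negbK => /eqP hyi.
    have := bigminn_le y i; rewrite hyi /= leqn0 => /eqP h0.
    by rewrite /Zmin h0 mul0r.
  apply: le_trans hmono.
  have hc := prob_compl p E; rewrite prob_avoid in hc.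
  have -> : iid_binom_prob n r p (fun y => ~~ E y) = 1 - (1 - binom_pmf n p 0) ^+ r.
    by rewrite hc opprB addrC subrK.
  have pm01 : 0 <= binom_pmf n p 0 <= 1.
    by rewrite bpmf_ge0 //= (bpmf_le1 (@ord0 n) hp01).
  have h1 := pow_le_exp r pm01.
  have h2 : 2 / delta <= r%:R * binom_pmf n p 0.
    apply: (le_trans expD); rewrite -rE pm0; apply: ler_wpM2l; first exact: ltW.
    by rewrite ler_expR lerN2 ltW.
  have h3 : expR (- (r%:R * binom_pmf n p 0)) <= expR (- (2 / delta)).
    by rewrite ler_expR lerN2.
  have := le_trans h1 (le_trans h3 expN2).
  lra.
Qed.
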